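(* Let $\mathbf{L}$ be an intermediate propositional logic with $\vdash_{\mathbf{L}}\lnot A\lor\lnot\lnot A$. Then for every derivation $\pi$ in $\varepsilon\tau(\mathbf{L})$ whose end formula is a negation $\lnot D$, every critical $\varepsilon\tau$-term $e$ of $\pi$ has a complete $e$-elimination set.
   Context: Intermediate propositional logic: contains intuitionistic, contained in classical propositional logic, closed under modus ponens and substitution. $\varepsilon\tau$-terms: $\varepsilon x\,A(x)$, $\tau x\,A(x)$. Critical formulas: $A(t)\to A(\varepsilon x\,A(x))$ (belonging to $\varepsilon x\,A(x)$) and $A(\tau x\,A(x))\to A(t)$ (belonging to $\tau x\,A(x)$). A derivation $\pi$ in $\varepsilon\tau(\mathbf{L})$ is a derivation in the quantifier-free language with $\varepsilon\tau$-terms from a finite set of critical formulas using substitution instances of theorems of $\mathbf{L}$ and modus ponens; $e$ is a critical term of $\pi$ if a critical formula used in $\pi$ belongs to $e$. Write the critical formulas of $\pi$ as $\Gamma\cup\Lambda(e)$, $\Lambda(e)$ those belonging to $e$, and the end formula as $D'(e)$. $\{s_1,\dots,s_k\}$ is a complete $e$-elimination set if $\Gamma[s_1/e],\dots,\Gamma[s_k/e]\vdash_{\mathbf{L}}D'(s_1)\lor\dots\lor D'(s_k)$, where $[s/e]$ replaces every occurrence of $e$ by $s$ and $\vdash_{\mathbf{L}}$ is derivability from assumptions by substitution instances of theorems of $\mathbf{L}$ and modus ponens. *)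

(* Defs.v *)
From Stdlib Require Import List Arith ClassicalEpsilon.
Import ListNotations.
Set Implicit Arguments.

Inductive pform : Type :=
| PVar : nat -> pform
| PBot : pform
| PAnd : pform -> pform -> pform
| POr  : pform -> pform -> pform
| PImp : pform -> pform -> pform.

Definition PNeg (A : pform) : pform := PImp A PBot.

Inductive IPC : pform -> Prop :=
| ipc_K  : forall A B, IPC (PImp A (PImp B A))
| ipc_S  : forall A B C,
    IPC (PImp (PImp A (PImp B C)) (PImp (PImp A B) (PImp A C)))
| ipc_andE1 : forall A B, IPC (PImp (PAnd A B) A)
| ipc_andE2 : forall A B, IPC (PImp (PAnd A B) B)
| ipc_andI  : forall A B, IPC (PImp A (PImp B (PAnd A B)))
| ipc_orI1  : forall A B, IPC (PImp A (POr A B))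
| ipc_orI2  : forall A B, IPC (PImp B (POr A B))
| ipc_orE   : forall A B C,
    IPC (PImp (PImp A C) (PImp (PImp B C) (PImp (POr A B) C)))
| ipc_efq   : forall A, IPC (PImp PBot A)
| ipc_mp    : forall A B, IPC A -> IPC (PImp A B) -> IPC B.

Fixpoint peval (v : nat -> bool) (A : pform) : bool :=
  match A with
  | PVar n => v n
  | PBot => false
  | PAnd A B => peval v A && peval v B
  | POr A B => peval v A || peval v B
  | PImp A B => negb (peval v A) || peval v B
  end.

Definition Taut (A : pform) : Prop := forall v, peval v A = true.

Fixpoint psubst (sigma : nat -> pform) (A : pform) : pform :=
  match A with
  | PVar n => sigma n
  | PBot => PBot
  | PAnd A B => PAnd (psubst sigma A) (psubst sigma B)
  | POr A B => POr (psubst sigma A) (psubst sigma B)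
  | PImp A B => PImp (psubst sigma A) (psubst sigma B)
  end.

Record intermediate_logic (L : pform -> Prop) : Prop := {
  il_int   : forall A, IPC A -> L A;
  il_class : forall A, L A -> Taut A;
  il_mp    : forall A B, L A -> L (PImp A B) -> L B;
  il_subst : forall sigma A, L A -> L (psubst sigma A)
}.

Inductive term : Type :=
| Var : nat -> term
| Fn  : nat -> list term -> term
| Eps : nat -> form -> term
| Tau : nat -> form -> term
with form : Type :=
| Pred : nat -> list term -> form
| FBot : form
| FAnd : form -> form -> form
| FOr  : form -> form -> form
| FImp : form -> form -> form.

Definition FNeg (A : form) : form := FImp A FBot.

Fixpoint subst_term (x : nat) (t : term) (u : term) : term :=
  match u with
  | Var y => if Nat.eqb x y then t else Var y
  | Fn f us => Fn f (map (subst_term x t) us)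
  | Eps y B => if Nat.eqb x y then Eps y B else Eps y (subst_form x t B)
  | Tau y B => if Nat.eqb x y then Tau y B else Tau y (subst_form x t B)
  end
with subst_form (x : nat) (t : term) (A : form) : form :=
  match A with
  | Pred p us => Pred p (map (subst_term x t) us)
  | FBot => FBot
  | FAnd A B => FAnd (subst_form x t A) (subst_form x t B)
  | FOr A B => FOr (subst_form x t A) (subst_form x t B)
  | FImp A B => FImp (subst_form x t A) (subst_form x t B)
  end.

Definition term_eq_dec (u v : term) : {u = v} + {u <> v} :=
  excluded_middle_informative (u = v).

Fixpoint repl_term (s e : term) (u : term) : term :=
  if term_eq_dec u e then s else
  match u with
  | Var y => Var y
  | Fn f us => Fn f (map (repl_term s e) us)
  | Eps y B => Eps y (repl_form s e B)
  | Tau y B => Tau y (repl_form s e B)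
  end
with repl_form (s e : term) (A : form) : form :=
  match A with
  | Pred p us => Pred p (map (repl_term s e) us)
  | FBot => FBot
  | FAnd A B => FAnd (repl_form s e A) (repl_form s e B)
  | FOr A B => FOr (repl_form s e A) (repl_form s e B)
  | FImp A B => FImp (repl_form s e A) (repl_form s e B)
  end.

Fixpoint inst (sigma : nat -> form) (A : pform) : form :=
  match A with
  | PVar n => sigma n
  | PBot => FBot
  | PAnd A B => FAnd (inst sigma A) (inst sigma B)
  | POr A B => FOr (inst sigma A) (inst sigma B)
  | PImp A B => FImp (inst sigma A) (inst sigma B)
  end.

Inductive Lder (L : pform -> Prop) (Gamma : form -> Prop) : form -> Prop :=
| ld_hyp : forall F, Gamma F -> Lder L Gamma F
| ld_thm : forall P sigma, L P -> Lder L Gamma (inst sigma P)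
| ld_mp  : forall A B, Lder L Gamma A -> Lder L Gamma (FImp A B) ->
           Lder L Gamma B.

Inductive crit : Type :=
| CEps : nat -> form -> term -> crit
| CTau : nat -> form -> term -> crit.

Definition crit_form (c : crit) : form :=
  match c with
  | CEps x A t => FImp (subst_form x t A) (subst_form x (Eps x A) A)
  | CTau x A t => FImp (subst_form x (Tau x A) A) (subst_form x t A)
  end.

Definition crit_term (c : crit) : term :=
  match c with
  | CEps x A _ => Eps x A
  | CTau x A _ => Tau x A
  end.

(* A derivation pi in eps-tau(L): a finite list of critical formulas
   (those used in pi), its end formula, and a derivation of the end
   formula from these critical formulas. *)
Record derivation (L : pform -> Prop) : Type := {
  crits : list crit;
  endf  : form;
  deriv : Lder L (fun F => exists c, In c crits /\ crit_form c = F) endf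
}.

Definition critical_term (L : pform -> Prop) (pi : derivation L) (e : term)
  : Prop := exists c, In c (crits pi) /\ crit_term c = e.

Definition Gamma_repl (L : pform -> Prop) (pi : derivation L) (e s : term)
  : form -> Prop :=
  fun F => exists c, In c (crits pi) /\ crit_term c <> e /\
                     F = repl_form s e (crit_form c).

Definition big_or (fs : form) (rest : list form) : form :=
  fold_left FOr rest fs.

(* {s_1, ..., s_k} (k >= 1) is a complete e-elimination set *)
Definition complete_elim_set (L : pform -> Prop) (pi : derivation L)
  (e : term) (s1 : term) (ss : list term) : Prop :=
  Lder L (fun F => Gamma_repl pi e s1 F \/ exists s, In s ss /\ Gamma_repl pi e s F)
    (big_or (repl_form s1 e (endf pi)) (map (fun s => repl_form s e (endf pi)) ss)).

Definition has_complete_elim_set (L : pform -> Prop) (pi : derivation L)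
  (e : term) : Prop :=
  exists s1 ss, complete_elim_set pi e s1 ss.

(* Main.v *)
Require Import Defs.
From Stdlib Require Import List Arith.
Import ListNotations.
Set Implicit Arguments.
From Stdlib Require Import Lia.

Definition ext (K : form -> Prop) (A : form) : form -> Prop := fun F => K F \/ F = A.

Lemma Lmono L K1 K2 F : (forall G, K1 G -> K2 G) -> Lder L K1 F -> Lder L K2 F.
Proof. intros Hs H; induction H. apply ld_hyp; auto. apply ld_thm; auto. exact (ld_mp IHLder1 IHLder2). Qed.

Lemma ax L (HL : intermediate_logic L) K P sigma : IPC P -> Lder L K (inst sigma P).
Proof. intro H. apply ld_thm. apply (il_int HL H). Qed.

Definition s2 (X Y : form) : nat -> form := fun n => match n with 0 => X | _ => Y end.
Definition s3 (X Y Z : form) : nat -> form := fun n => match n with 0 => X | 1 => Y | _ => Z end.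

Lemma axK L (HL : intermediate_logic L) K X Y : Lder L K (FImp X (FImp Y X)).
Proof. exact (@ax L HL K _ (s2 X Y) (ipc_K (PVar 0) (PVar 1))). Qed.
Lemma axS L (HL : intermediate_logic L) K X Y Z : Lder L K (FImp (FImp X (FImp Y Z)) (FImp (FImp X Y) (FImp X Z))).
Proof. exact (@ax L HL K _ (s3 X Y Z) (ipc_S (PVar 0) (PVar 1) (PVar 2))). Qed.
Lemma axOrI1 L (HL : intermediate_logic L) K X Y : Lder L K (FImp X (FOr X Y)).
Proof. exact (@ax L HL K _ (s2 X Y) (ipc_orI1 (PVar 0) (PVar 1))). Qed.
Lemma axOrI2 L (HL : intermediate_logic L) K X Y : Lder L K (FImp Y (FOr X Y)).
Proof. exact (@ax L HL K _ (s2 X Y) (ipc_orI2 (PVar 0) (PVar 1))). Qed.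
Lemma axOrE L (HL : intermediate_logic L) K X Y Z : Lder L K (FImp (FImp X Z) (FImp (FImp Y Z) (FImp (FOr X Y) Z))).
Proof. exact (@ax L HL K _ (s3 X Y Z) (ipc_orE (PVar 0) (PVar 1) (PVar 2))). Qed.
Lemma axEfq L (HL : intermediate_logic L) K X : Lder L K (FImp FBot X).
Proof. exact (@ax L HL K _ (s2 X X) (ipc_efq (PVar 0))). Qed.

Lemma ded L (HL : intermediate_logic L) K A B : Lder L (ext K A) B -> Lder L K (FImp A B).
Proof.
  intro H; induction H as [F H|P sigma H|A0 B0 H1 IH1 H2 IH2].
  - destruct H as [H| ->].
    + eapply ld_mp. apply ld_hyp; exact H. apply axK; auto.
    + eapply ld_mp. apply (@axK L HL K A A). eapply ld_mp. apply (@axK L HL K A (FImp A A)).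
      apply axS; auto.
  - eapply ld_mp. apply ld_thm; exact H. apply axK; auto.
  - eapply ld_mp. exact IH1. eapply ld_mp. exact IH2. apply axS; auto.
Qed.

Lemma hyp_ext L K A : Lder L (ext K A) A.
Proof. apply ld_hyp. right; reflexivity. Qed.
Lemma lift L K A F : Lder L K F -> Lder L (ext K A) F.
Proof. apply Lmono. intros; left; auto. Qed.

Lemma dni L (HL : intermediate_logic L) K A : Lder L K A -> Lder L K (FNeg (FNeg A)).
Proof. intro H. apply ded; auto. eapply ld_mp. apply lift; exact H. apply hyp_ext. Qed.

Lemma negimp L (HL : intermediate_logic L) K B Y : Lder L K (FNeg B) -> Lder L K (FImp B Y).
Proof. intro H. apply ded; auto. eapply ld_mp. eapply ld_mp. apply hyp_ext. apply lift; exact H.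
  apply axEfq; auto. Qed.

Lemma nnimp L (HL : intermediate_logic L) K X B : Lder L K (FNeg (FNeg B)) -> Lder L K (FNeg (FNeg (FImp X B))).
Proof.
  intro H. apply ded; auto. eapply ld_mp. 2: apply lift; exact H.
  apply ded; auto. eapply ld_mp. 2: apply lift; apply hyp_ext.
  eapply ld_mp. apply hyp_ext. apply axK; auto.
Qed.

Lemma nnmp L (HL : intermediate_logic L) K H Z : Lder L K (FImp H (FNeg Z)) -> Lder L K (FNeg (FNeg H)) -> Lder L K (FNeg Z).
Proof.
  intros H1 H2. apply ded; auto. eapply ld_mp. 2: apply lift; exact H2.
  apply ded; auto. eapply ld_mp. apply lift; apply hyp_ext.
  eapply ld_mp. apply hyp_ext. apply lift; apply lift; exact H1.
Qed.

Lemma or_elim L (HL : intermediate_logic L) K X Y C : Lder L K (FOr X Y) -> Lder L (ext K X) C -> Lder L (ext K Y) C -> Lder L K C.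
Proof.
  intros H0 H1 H2. eapply ld_mp. exact H0. eapply ld_mp. apply (ded HL H2).
  eapply ld_mp. apply (ded HL H1). apply axOrE; auto.
Qed.

Lemma or_comm' L (HL : intermediate_logic L) K X Y : Lder L K (FOr X Y) -> Lder L K (FOr Y X).
Proof.
  intro H. eapply or_elim; eauto.
  eapply ld_mp. apply hyp_ext. apply axOrI2; auto.
  eapply ld_mp. apply hyp_ext. apply axOrI1; auto.
Qed.

Lemma deduce_list L (HL : intermediate_logic L) : forall Hs K Y, Lder L (fun F => K F \/ In F Hs) Y -> Lder L K (fold_right FImp Y Hs).
Proof.
  induction Hs as [|h hs IH]; intros K Y H; simpl.
  - eapply Lmono; [|exact H]. intros G [G1|[]]; auto.
  - apply ded; auto. apply IH. eapply Lmono; [|exact H]. unfold ext. intros G [G1|[G2|G3]]; auto.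
Qed.

Lemma discharge L (HL : intermediate_logic L) : forall Hs K Z, Lder L K (fold_right FImp (FNeg Z) Hs) ->
  (forall H, In H Hs -> Lder L K (FNeg (FNeg H))) -> Lder L K (FNeg Z).
Proof.
  induction Hs as [|h hs IH]; intros K Z H1 H2; simpl in *; auto.
  eapply nnmp; eauto. apply ded; auto. apply IH.
  - eapply ld_mp. apply hyp_ext. apply lift; exact H1.
  - intros H3 H4. apply lift; auto.
Qed.

Lemma big_or_intro L (HL : intermediate_logic L) K : forall rest f X, In X (f :: rest) -> Lder L K X -> Lder L K (big_or f rest).
Proof.
  induction rest as [|r rest IH]; intros f X Hin HX; simpl in *.
  - destruct Hin as [->|[]]; auto.
  - destruct Hin as [->|[->|Hin]].
    + apply (IH (FOr X r) (FOr X r)). left; auto. eapply ld_mp. exact HX. apply axOrI1; auto.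
    + apply (IH (FOr f X) (FOr f X)). left; auto. eapply ld_mp. exact HX. apply axOrI2; auto.
    + apply (IH _ X); auto.
Qed.

Lemma claim L (HL : intermediate_logic L) (P Q : term -> form) C
  (Hor : forall K u, Lder L K (FOr (P u) (Q u))) : forall l K,
  (forall K', (forall F, K F -> K' F) -> (forall u, In u l -> K' (P u)) -> Lder L K' C) ->
  (forall u K', In u l -> (forall F, K F -> K' F) -> K' (Q u) -> Lder L K' C) ->
  Lder L K C.
Proof.
  induction l as [|a l IH]; intros K H1 H2.
  - apply H1; auto. intros u [].
  - apply (or_elim HL (Hor K a)).
    + apply IH.
      * intros K' Hs Hall. apply H1. intros F HF; apply Hs; left; auto.
        intros u [<-|Hu]. apply Hs; right; reflexivity. auto.
      * intros u K' Hu Hs HQ. apply (H2 u K'); auto. right; auto.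
        intros F HF; apply Hs; left; auto.
    + apply (H2 a). left; auto. intros F HF; left; auto. right; reflexivity.
Qed.

Fixpoint tsize (u : term) : nat :=
  match u with
  | Var _ => 1
  | Fn _ us => S (list_sum (map tsize us))
  | Eps _ B => S (fsize B)
  | Tau _ B => S (fsize B)
  end
with fsize (A : form) : nat :=
  match A with
  | Pred _ us => S (list_sum (map tsize us))
  | FBot => 1
  | FAnd A B => S (fsize A + fsize B)
  | FOr A B => S (fsize A + fsize B)
  | FImp A B => S (fsize A + fsize B)
  end.

Lemma in_sum u us : In u us -> tsize u <= list_sum (map tsize us).
Proof. induction us as [|a us IH]; simpl. intros []. intros [->|H]; try specialize (IH H); lia. Qed.

Lemma tsize_pos u : 0 < tsize u. Proof. destruct u; simpl; lia. Qed.

Lemma size_ind (Pt : term -> Prop) (Pf : form -> Prop) :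
  (forall n, (forall u, tsize u < n -> Pt u) -> (forall B, fsize B < n -> Pf B) ->
     (forall u, tsize u = n -> Pt u) /\ (forall B, fsize B = n -> Pf B)) ->
  (forall u, Pt u) /\ (forall B, Pf B).
Proof.
  intro H.
  assert (forall n, (forall u, tsize u < n -> Pt u) /\ (forall B, fsize B < n -> Pf B)).
  { induction n as [|n [IH1 IH2]]. split; intros; lia.
    destruct (H n IH1 IH2) as [H1 H2]. split; intros.
    - destruct (Nat.eq_dec (tsize u) n). apply H1; auto. apply IH1; lia.
    - destruct (Nat.eq_dec (fsize B) n). apply H2; auto. apply IH2; lia. }
  split; intros. apply (H0 (S (tsize u))); lia. apply (H0 (S (fsize B))); lia.
Qed.

Ltac unf_repl := match goal with |- context [term_eq_dec ?a ?b] => destruct (term_eq_dec a b) end.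

Lemma repl_small s e :
  (forall u, tsize u < tsize e -> repl_term s e u = u) /\
  (forall B, fsize B < tsize e -> repl_form s e B = B).
Proof.
  apply size_ind. intros n IHt IHf. split.
  - intros u Hn Hu. destruct u; simpl; unf_repl; subst; try lia; simpl in *.
    + reflexivity.
    + f_equal. rewrite <- map_id. apply map_ext_in. intros a Ha.
      pose proof (in_sum _ _ Ha). apply IHt; lia.
    + f_equal. apply IHf; lia.
    + f_equal. apply IHf; lia.
  - intros B Hn HB. destruct B; simpl in *; f_equal; try reflexivity;
      try (apply IHf; lia).
    rewrite <- map_id. apply map_ext_in. intros a Ha.
    pose proof (in_sum _ _ Ha). apply IHt; lia.
Qed.

Lemma repl_self e :
  (forall u, repl_term e e u = u) /\ (forall B, repl_form e e B = B).
Proof.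
  apply size_ind. intros n IHt IHf. split.
  - intros u Hn. destruct u; simpl; unf_repl; subst; auto; simpl in *.
    + f_equal. rewrite <- map_id. apply map_ext_in. intros a Ha.
      pose proof (in_sum _ _ Ha). apply IHt; lia.
    + f_equal. apply IHf; lia.
    + f_equal. apply IHf; lia.
  - intros B Hn. destruct B; simpl in *; f_equal; try reflexivity;
      try (apply IHf; lia).
    rewrite <- map_id. apply map_ext_in. intros a Ha.
    pose proof (in_sum _ _ Ha). apply IHt; lia.
Qed.

Lemma repl_subst s e x A0 t (HE : e = Eps x A0 \/ e = Tau x A0) :
  (forall u, tsize u < tsize e -> repl_term s e (subst_term x t u) = subst_term x (repl_term s e t) u) /\
  (forall B, fsize B < tsize e -> repl_form s e (subst_form x t B) = subst_form x (repl_term s e t) B).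
Proof.
  apply size_ind. intros n IHt IHf. split.
  - intros u Hn Hu. destruct u as [y|f us|y B|y B]; simpl in *.
    + destruct (Nat.eqb_spec x y). reflexivity.
      simpl. unf_repl; subst; simpl in *; [lia|reflexivity].
    + unf_repl. destruct HE; subst; discriminate.
      f_equal. rewrite map_map. apply map_ext_in. intros a Ha.
      pose proof (in_sum _ _ Ha). apply IHt; lia.
    + destruct (Nat.eqb_spec x y).
      * apply (proj1 (repl_small s e)). simpl; lia.
      * simpl. unf_repl. destruct HE; subst e; inversion e0; congruence.
        f_equal. apply IHf; lia.
    + destruct (Nat.eqb_spec x y).
      * apply (proj1 (repl_small s e)). simpl; lia.
      * simpl. unf_repl. destruct HE; subst e; inversion e0; congruence.
        f_equal. apply IHf; lia.
  - intros B Hn HB. destruct B; simpl in *; f_equal; try reflexivity;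
      try (apply IHf; lia).
    rewrite map_map. apply map_ext_in. intros a Ha.
    pose proof (in_sum _ _ Ha). apply IHt; lia.
Qed.

Lemma repl_inst s e sigma P : repl_form s e (inst sigma P) = inst (fun n => repl_form s e (sigma n)) P.
Proof. induction P; simpl; congruence. Qed.

Lemma Lder_repl L G F s e : Lder L G F ->
  Lder L (fun F' => exists F0, G F0 /\ F' = repl_form s e F0) (repl_form s e F).
Proof.
  intro H; induction H as [F H|P sigma H|A0 B0 H1 IH1 H2 IH2].
  - apply ld_hyp; eauto.
  - rewrite repl_inst. apply ld_thm; auto.
  - simpl in IH2. exact (ld_mp IH1 IH2).
Qed.

Lemma repl_top s e : repl_term s e e = s.
Proof. destruct e; simpl; unf_repl; congruence. Qed.

Definition crit_arg (c : crit) : term := match c with CEps _ _ t => t | CTau _ _ t => t end.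

Theorem mainTheorem14 (L : pform -> Prop) (HL : intermediate_logic L)
  (Hwem : forall A : pform, L (POr (PNeg A) (PNeg (PNeg A))))
  (pi : derivation L) (D : form) (Hend : endf pi = FNeg D)
  (e : term) (He : critical_term pi e) :
  has_complete_elim_set pi e.
Proof.
  destruct He as [c0 [Hc0 Hce]].
  exists e, (map crit_arg (crits pi)). unfold complete_elim_set.
  set (ts := map crit_arg (crits pi)).
  assert (Hphi : forall s K', (forall F, Gamma_repl pi e s F -> K' F) ->
     (forall c, In c (crits pi) -> crit_term c = e ->
        Lder L K' (FNeg (FNeg (repl_form s e (crit_form c))))) ->
     Lder L K' (repl_form s e (endf pi))).
  { intros s K' HG Hc.
    pose proof (Lder_repl s e (deriv pi)) as H0.
    set (Hs := map (fun c => repl_form s e (crit_form c)) (crits pi)).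
    assert (H1 : Lder L (fun F => K' F \/ In F Hs) (repl_form s e (endf pi))).
    { eapply Lmono; [|exact H0]. intros F [F0 [[c [Hc1 Hc2]] ->]]. right. subst F0.
      unfold Hs. apply (in_map (fun c => repl_form s e (crit_form c))); auto. }
    apply deduce_list in H1; auto.
    rewrite Hend in H1 |- *.
    change (repl_form s e (FNeg D)) with (FNeg (repl_form s e D)) in *.
    eapply discharge; eauto.
    intros H Hin. unfold Hs in Hin. apply in_map_iff in Hin. destruct Hin as [c [<- Hc1]].
    destruct (term_eq_dec (crit_term c) e) as [Heq|Hne]. auto.
    apply dni; auto. apply ld_hyp. apply HG. exists c; auto. }
  destruct c0 as [x A t0|x A t0]; simpl in Hce; subst e.
  - assert (Hor : forall K u, Lder L K (FOr (FNeg (subst_form x u A)) (FNeg (FNeg (subst_form x u A))))).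
    { intros K u.
      exact (ld_thm L K (POr (PNeg (PVar 0)) (PNeg (PNeg (PVar 0)))) (fun _ => subst_form x u A) (Hwem (PVar 0))). }
    apply (claim HL (fun u => FNeg (subst_form x u A)) (fun u => FNeg (FNeg (subst_form x u A))) Hor ts).
    + intros K' HGK Hall.
      apply (big_or_intro HL (X := repl_form (Eps x A) (Eps x A) (endf pi))). left; reflexivity.
      apply Hphi. intros F HF; apply HGK; left; auto.
      intros c Hc Hct. destruct c as [x' A' t|x' A' t]; simpl in Hct; [injection Hct as -> ->| discriminate].
      rewrite (proj2 (repl_self _)). simpl crit_form.
      apply dni; auto. apply negimp; auto. apply ld_hyp. apply Hall.
      unfold ts. apply (in_map crit_arg _ (CEps x A t) Hc).
    + intros u K' Hu HGK HQ.
      apply (big_or_intro HL (X := repl_form u (Eps x A) (endf pi))).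
      right. apply (in_map (fun s => repl_form s (Eps x A) (endf pi))); auto.
      apply Hphi. intros F HF; apply HGK; right; eauto.
      intros c Hc Hct. destruct c as [x' A' t|x' A' t]; simpl in Hct; [injection Hct as -> ->| discriminate].
      simpl crit_form. cbn [repl_form].
      pose proof (proj2 (repl_subst u t (or_introl (eq_refl (Eps x A)))) A) as E1.
      pose proof (proj2 (repl_subst u (Eps x A) (or_introl (eq_refl (Eps x A)))) A) as E2.
      rewrite E1, E2 by (simpl; lia). rewrite repl_top.
      apply nnimp; auto. apply ld_hyp; exact HQ.
  - assert (Hor : forall K u, Lder L K (FOr (FNeg (FNeg (subst_form x u A))) (FNeg (subst_form x u A)))).
    { intros K u. apply or_comm'; auto.
      exact (ld_thm L K (POr (PNeg (PVar 0)) (PNeg (PNeg (PVar 0)))) (fun _ => subst_form x u A) (Hwem (PVar 0))). }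
    apply (claim HL (fun u => FNeg (FNeg (subst_form x u A))) (fun u => FNeg (subst_form x u A)) Hor ts).
    + intros K' HGK Hall.
      apply (big_or_intro HL (X := repl_form (Tau x A) (Tau x A) (endf pi))). left; reflexivity.
      apply Hphi. intros F HF; apply HGK; left; auto.
      intros c Hc Hct. destruct c as [x' A' t|x' A' t]; simpl in Hct; [discriminate|injection Hct as -> ->].
      rewrite (proj2 (repl_self _)). simpl crit_form.
      apply nnimp; auto. apply ld_hyp. apply Hall.
      unfold ts. apply (in_map crit_arg _ (CTau x A t) Hc).
    + intros u K' Hu HGK HQ.
      apply (big_or_intro HL (X := repl_form u (Tau x A) (endf pi))).
      right. apply (in_map (fun s => repl_form s (Tau x A) (endf pi))); auto.
      apply Hphi. intros F HF; apply HGK; right; eauto.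
      intros c Hc Hct. destruct c as [x' A' t|x' A' t]; simpl in Hct; [discriminate|injection Hct as -> ->].
      simpl crit_form. cbn [repl_form].
      pose proof (proj2 (repl_subst u t (or_intror (eq_refl (Tau x A)))) A) as E1.
      pose proof (proj2 (repl_subst u (Tau x A) (or_intror (eq_refl (Tau x A)))) A) as E2.
      rewrite E1, E2 by (simpl; lia). rewrite repl_top.
      apply dni; auto. apply negimp; auto. apply ld_hyp; exact HQ.
Qed.
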